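(* A coarse space $(X,\mathcal E)$ has $\operatorname{asdim}(X)\le n$ for some $n\in\omega$ if and only if for every entourage $\varepsilon\in\mathcal E$ there is an entourage $\delta\in\mathcal E$ such that for every finite set $F\subset X$ there is a coloring $\chi:F\to\{0,\dots,n\}$ such that every $\chi$-monochrome $\varepsilon$-chain $C\subset F$ satisfies $C\times C\subset\delta$.
   Context: A coarse space is a pair $(X,\mathcal E)$ of a set and a family of entourages $\varepsilon\subset X\times X$ that contain the diagonal, are symmetric, are (up to containment) closed under composition, and such that any symmetric $\delta$ with $\Delta_X\subset\delta\subset\varepsilon\in\mathcal E$ is in $\mathcal E$. $B(x,\varepsilon)=\{y:(x,y)\in\varepsilon\}$; $\operatorname{mesh}(\mathcal U)=\bigcup_{U\in\mathcal U}U\times U$. $\operatorname{asdim}(X)$ is the least $n\in\omega$ such that for every $\varepsilon\in\mathcal E$ there is a cover $\mathcal U$ of $X$ with $\operatorname{mesh}(\mathcal U)\subset\delta$ for some $\delta\in\mathcal E$ and each $B(x,\varepsilon)$ meeting at most $n+1$ members of $\mathcal U$ ($\infty$ if none). An $\varepsilon$-chain is a finite set $\{x_0,\dots,x_m\}$ with $(x_i,x_{i+1})\in\varepsilon$ for all $i<m$; it is $\chi$-monochrome if $\chi$ is constant on it. *)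

(* Defs.v *)
From Stdlib Require Import List Arith.
Import ListNotations.

Definition entourage (X : Type) := X -> X -> Prop.

Record coarse_space (X : Type) (E : entourage X -> Prop) : Prop := {
  cs_diag : forall e, E e -> forall x, e x x;
  cs_sym : forall e, E e -> forall x y, e x y -> e y x;
  cs_comp : forall e d, E e -> E d ->
    exists h, E h /\ forall x y z, e x y -> d y z -> h x z;
  cs_down : forall e d, E e -> (forall x, d x x) -> (forall x y, d x y -> d y x) ->
    (forall x y, d x y -> e x y) -> E d }.

Definition ball {X : Type} (x : X) (e : entourage X) : X -> Prop := fun y => e x y.

Definition is_cover {X : Type} (U : (X -> Prop) -> Prop) : Prop :=
  forall x, exists A, U A /\ A x.

Definition mesh_sub {X : Type} (U : (X -> Prop) -> Prop) (d : entourage X) : Prop :=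
  forall A, U A -> forall x y, A x -> A y -> d x y.

(* the set S meets at most k members of U (members counted up to extensional
   equality of sets) *)
Definition meets_at_most {X : Type} (U : (X -> Prop) -> Prop) (S : X -> Prop) (k : nat) : Prop :=
  exists s : list (X -> Prop), length s <= k /\
    forall A, U A -> (exists y, A y /\ S y) ->
      exists A', In A' s /\ forall z, A z <-> A' z.

Definition asdim_prop {X : Type} (E : entourage X -> Prop) (n : nat) : Prop :=
  forall e, E e -> exists U : (X -> Prop) -> Prop,
    is_cover U /\ (exists d, E d /\ mesh_sub U d) /\
    forall x, meets_at_most U (ball x e) (S n).

(* asdim(X) <= n, where asdim is the least n with asdim_prop (or infinity) *)
Definition asdim_le {X : Type} (E : entourage X -> Prop) (n : nat) : Prop :=
  exists m, m <= n /\ asdim_prop E m.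

(* the list l = [x_0; ...; x_m] satisfies (x_i, x_{i+1}) in e for all i < m;
   its set of elements is then an e-chain *)
Fixpoint is_chain {X : Type} (e : entourage X) (l : list X) : Prop :=
  match l with
  | x :: ((y :: _) as t) => e x y /\ is_chain e t
  | _ => True
  end.

(* Main.v *)
Require Import Defs.
From Stdlib Require Import List Arith.
From Stdlib Require Import Lia Classical ClassicalEpsilon Relations.
From mathcomp Require classical_sets.
Import ListNotations.
Set Bullet Behavior "Strict Subproofs".

Module ZZ.
Import classical_sets.
Lemma myzorn (T : Type) (P : (T -> Prop) -> Prop) :
  (forall F : (T -> Prop) -> Prop, (forall A, F A -> P A) ->
     (forall A B, F A -> F B -> (forall t, A t -> B t) \/ (forall t, B t -> A t)) ->
     P (fun t => exists A, F A /\ A t)) ->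
  exists A, P A /\ forall B, (forall t, A t -> B t) -> P B -> forall t, B t -> A t.
Proof.
intros H.
destruct (@Zorn_bigcup T P) as [A0 [PA HA]].
- intros F FP Ftot.
  assert (e : (fun t => exists A, F A /\ A t) = bigcup F (fun X => X)).
  { apply boolp.funext; intro t; apply boolp.propext; split.
    intros [A [FA At]]; exists A; auto.
    intros [A FA At]; exists A; auto. }
  rewrite <- e. apply H. auto. intros A B FA FB; destruct (Ftot A B FA FB); auto.
- exists A0; split; auto. intros B AB PB.
  apply NNPP; intro N. apply (HA B); auto. split; auto.
Qed.
End ZZ.

Fixpoint epow {X : Type} (e : entourage X) (k : nat) : entourage X :=
  match k with
  | 0 => e
  | S k => fun x z => exists y, epow e k x y /\ e y z
  end.

Lemma epow_E X E (cs : coarse_space X E) e (He : E e) k :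
  exists h, E h /\ forall x y, epow e k x y -> h x y.
Proof.
induction k; simpl.
- exists e; auto.
- destruct IHk as [h [Hh Hsub]].
  destruct (cs_comp _ _ cs h e Hh He) as [g [Hg Hc]].
  exists g; split; auto. intros x z [y [H1 H2]]; eauto.
Qed.

Lemma epow_mono X (e : entourage X) (Hr : forall x, e x x) k x y :
  epow e k x y -> epow e (S k) x y.
Proof. intro H; exists y; split; auto. Qed.

Lemma epow_mono_le X (e : entourage X) (Hr : forall x, e x x) k m x y :
  k <= m -> epow e k x y -> epow e m x y.
Proof. induction 1; auto. intro H0; apply epow_mono; auto. Qed.

Lemma epow_pre X (e : entourage X) k : forall a b c,
  e a b -> epow e k b c -> epow e (S k) a c.
Proof.
induction k; intros a b c Hab H.
- exists b; split; auto.
- destruct H as [y [H1 H2]]. exists y; split; auto. eapply IHk; eauto.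
Qed.

Definition ext {X : Type} (A B : X -> Prop) := forall z, A z <-> B z.

Fixpoint nd {X : Type} (L : list (X -> Prop)) : Prop :=
  match L with
  | [] => True
  | a :: L => (forall b, In b L -> ~ ext a b) /\ nd L
  end.

Lemma pigeon X : forall (L s : list (X -> Prop)), nd L ->
  (forall A, In A L -> exists A', In A' s /\ ext A A') -> length L <= length s.
Proof.
induction L as [|a L IHL]; intros s ndL H; simpl. lia.
destruct ndL as [Ha ndL].
destruct (H a (or_introl eq_refl)) as [a' [Ina' ea]].
destruct (in_split _ _ Ina') as [s1 [s2 ->]].
assert (length L <= length (s1 ++ s2)).
{ apply IHL; auto. intros b Hb. destruct (H b (or_intror Hb)) as [b' [Inb' eb]].
  exists b'; split; auto. apply in_app_or in Inb'.
  destruct Inb' as [Hi|[Hi|Hi]]; try (apply in_or_app; auto; fail).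
  subst b'. exfalso; apply (Ha b Hb). intro z; specialize (ea z); specialize (eb z); tauto. }
rewrite length_app in *; simpl. lia.
Qed.

Definition inS {X : Type} (U : (X -> Prop) -> Prop) (e : entourage X) k x A :=
  U A /\ exists y, A y /\ epow e k x y.

Lemma color_exists X (U : (X -> Prop) -> Prop) (e h : entourage X) n m
  (Hr : forall x, e x x) (Hcov : is_cover U) (Hm : m <= n)
  (Hh : forall x y, epow e (S n) x y -> h x y)
  (Hmult : forall x, meets_at_most U (ball x h) (S m)) :
  forall x, exists k, k <= n /\ forall A, inS U e (S k) x A -> inS U e k x A.
Proof.
intros x. apply NNPP; intro N.
assert (Hb : forall j, j <= S n -> exists L, length L = S j /\ nd L /\
             forall A, In A L -> inS U e j x A).
{ induction j as [|j IHj]; intros Hj.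
  - destruct (Hcov x) as [A [UA Ax]]. exists [A]. simpl. split; auto. split.
    + split; [intros b []|exact I].
    + intros A' [<-|[]]. split; auto. exists x; split; auto; apply Hr.
  - destruct IHj as [L [HL [ndL HinL]]]; [lia|].
    assert (exists A, inS U e (S j) x A /\ ~ inS U e j x A) as [A [HA1 HA2]].
    { apply NNPP; intro N2. apply N. exists j; split; [lia|]. intros A HA.
      apply NNPP; intro N3. apply N2; eauto. }
    exists (A :: L). split; simpl; [lia|]. split.
    + split; auto. intros b Hb eab. apply HA2.
      destruct (HinL b Hb) as [Ub [y [by0 ey]]]. split. apply HA1.
      exists y; split; auto. apply (proj2 (eab y)); auto.
    + intros B [<-|HB]. auto. destruct (HinL B HB) as [UB [y [By ey]]].
      split; auto. exists y; split; auto. apply epow_mono; auto. }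
destruct (Hb (S n)) as [L [HL [ndL HinL]]]; auto.
destruct (Hmult x) as [s [Hs Hc]].
assert (length L <= length s).
{ apply pigeon; auto. intros A HA. destruct (HinL A HA) as [UA [y [Ay ey]]].
  apply Hc; auto. exists y; split; auto. unfold ball; apply Hh; auto. }
lia.
Qed.

Lemma chain_inS X (U : (X -> Prop) -> Prop) (e : entourage X) (chi : X -> nat) k
  (Hstep : forall a b, e a b -> chi a = k -> chi b = k ->
     forall A, inS U e k a A -> inS U e k b A)
  (Hsym : forall a b, e a b -> e b a) :
  forall C, is_chain e C -> (forall z, In z C -> chi z = k) ->
  forall x y, In x C -> In y C -> forall A, inS U e k x A -> inS U e k y A.
Proof.
induction C as [|a C IH]; intros Hch Hk x y Hx Hy A HA.
- destruct Hx.
- destruct C as [|b C'].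
  + destruct Hx as [<-|[]]; destruct Hy as [<-|[]]; auto.
  + destruct Hch as [Hab Hch].
    assert (IH' := IH Hch (fun z Hz => Hk z (or_intror Hz))).
    assert (ka : chi a = k) by (apply Hk; left; auto).
    assert (kb : chi b = k) by (apply Hk; right; left; auto).
    destruct Hx as [<-|Hx]; destruct Hy as [<-|Hy]; auto.
    * apply (IH' b); simpl; auto. apply (Hstep a b); auto.
    * apply (Hstep b a); auto. apply (IH' x b); simpl; auto.
    * apply (IH' x y); auto.
Qed.

Lemma forward X E n (cs : coarse_space X E) : asdim_le E n ->
  forall e, E e -> exists d, E d /\ forall F : list X, exists chi : X -> nat,
    (forall x, In x F -> chi x <= n) /\
    forall C : list X, (forall x, In x C -> In x F) -> is_chain e C ->
      (forall x y, In x C -> In y C -> chi x = chi y) ->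
      forall x y, In x C -> In y C -> d x y.
Proof.
intros [m [Hm Hasd]] e He.
assert (Hr : forall x, e x x) by (apply (cs_diag _ _ cs); auto).
assert (Hs : forall x y, e x y -> e y x) by (apply (cs_sym _ _ cs); auto).
destruct (epow_E X E cs e He (S n)) as [h1 [Eh1 Hh1]].
destruct (Hasd h1 Eh1) as [U [Hcov [[d0 [Ed0 Hmesh]] Hmult]]].
destruct (epow_E X E cs e He n) as [hn [Ehn Hhn]].
destruct (cs_comp _ _ cs hn d0 Ehn Ed0) as [dl [Edl Hdl]].
exists dl; split; auto. intro F.
assert (Hk := color_exists X U e h1 n m Hr Hcov Hm Hh1 Hmult).
pose (chi := fun x => proj1_sig (constructive_indefinite_description _ (Hk x))).
assert (Hchi : forall x, chi x <= n /\ forall A, inS U e (S (chi x)) x A -> inS U e (chi x) x A).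
{ intro x. exact (proj2_sig (constructive_indefinite_description _ (Hk x))). }
exists chi. split. intros x _; apply Hchi.
intros C _ Hch Hmono x y Hx Hy.
set (k := chi x).
destruct (Hcov y) as [B [UB By]].
assert (HB : inS U e k y B).
{ split; auto. exists y; split; auto. apply (epow_mono_le _ e Hr 0); simpl; auto. lia. }
assert (HB' : inS U e k x B).
{ apply (chain_inS X U e chi k) with C y; auto.
  - intros a b Hab ka kb A [UA [z [Az Hz]]].
    destruct (Hchi b) as [_ Hb]. rewrite kb in Hb. apply Hb.
    split; auto. exists z; split; auto. apply (epow_pre X e k b a z); auto.
  - intros z Hz; apply Hmono; auto. }
destruct HB' as [_ [z [Bz Hz]]].
apply (Hdl x z y).
- apply Hhn. apply (epow_mono_le _ e Hr k); auto. apply Hchi.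
- apply (Hmesh B UB); auto.
Qed.

Lemma compact X (n : nat) (Good : list X -> (X -> nat) -> Prop)
  (Hmono : forall F F' chi, (forall x, In x F -> In x F') -> Good F' chi -> Good F chi)
  (Hloc : forall F chi chi', (forall x, In x F -> chi x = chi' x) -> Good F chi -> Good F chi')
  (Hbound : forall F chi x, Good F chi -> In x F -> chi x <= n)
  (Hall : forall F, exists chi, Good F chi) :
  exists chi, forall F, Good F chi.
Proof.
pose (P := fun A : X * nat -> Prop =>
  (forall x i j, A (x,i) -> A (x,j) -> i = j) /\
  forall F, exists chi, Good F chi /\ forall x i, In x F -> A (x,i) -> chi x = i).
destruct (ZZ.myzorn (X * nat) P) as [A [PA Hmax]].
- intros Fam FP Ftot.
  pose (Un := fun t => exists A, Fam A /\ A t).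
  assert (Hfun : forall x i j, Un (x,i) -> Un (x,j) -> i = j).
  { intros x i j [A1 [F1 H1]] [A2 [F2 H2]].
    destruct (Ftot A1 A2 F1 F2) as [S|S].
    - apply (proj1 (FP A2 F2) x); auto.
    - apply (proj1 (FP A1 F1) x); auto. }
  assert (Hhelp : forall M x i j, Fam M -> M (x,j) -> Un (x,i) -> M (x,i)).
  { intros M x i j FM Mj [A' [FA' A'i]].
    destruct (Ftot A' M FA' FM) as [S|S]; auto.
    assert (i = j) by (apply (proj1 (FP A' FA') x); auto). subst; auto. }
  assert (Hlist : forall L, (forall x i, In x L -> ~ Un (x,i)) \/
     exists M, Fam M /\ forall x i, In x L -> Un (x,i) -> M (x,i)).
  { induction L as [|a L IH].
    - left; intros x i [].
    - destruct (classic (exists i, Un (a,i))) as [[i0 [A0 [FA0 A0a]]]|Hno].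
      + right.
        assert (exists M', Fam M' /\ (forall t, A0 t -> M' t) /\
           forall x i, In x L -> Un (x,i) -> M' (x,i)) as [M' [FM' [S0 SL]]].
        { destruct IH as [IH|[M [FM HM]]].
          - exists A0; split; auto. split; auto. intros x i Hx Hu; exfalso; eapply IH; eauto.
          - destruct (Ftot A0 M FA0 FM) as [S|S].
            + exists M; split; auto.
            + exists A0; split; auto. }
        exists M'; split; auto. intros x i [<-|Hx] Hu; auto.
        apply (Hhelp M' a i i0); auto.
      + destruct IH as [IH|[M [FM HM]]].
        * left. intros x i [<-|Hx] Hu; [apply Hno; eauto | eapply IH; eauto].
        * right. exists M; split; auto. intros x i [<-|Hx] Hu; auto.
          exfalso; apply Hno; eauto. }
  split; auto. intro F.
  destruct (Hlist F) as [Hn|[M [FM HM]]].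
  + destruct (Hall F) as [chi Hc]. exists chi; split; auto.
    intros x i Hx Hu; exfalso; eapply Hn; eauto.
  + destruct (proj2 (FP M FM) F) as [chi [Hc Ha]]. exists chi; split; auto.
- assert (Htot : forall x, exists i, A (x,i)).
  { intro x0. apply NNPP; intro Hno.
    assert (Hno' : forall i, ~ A (x0,i)) by (intros i Hi; apply Hno; eauto).
    pose (Ak := fun k (t : X * nat) => A t \/ t = (x0,k)).
    pose (Bad := fun k F => forall chi, Good F chi ->
              (forall x i, In x F -> Ak k (x,i) -> chi x = i) -> False).
    assert (Hbad : forall k, exists F, Bad k F).
    { intro k. apply NNPP; intro N.
      assert (P (Ak k)).
      { split.
        - intros x i j [H1|H1] [H2|H2].
          + apply (proj1 PA x); auto.
          + injection H2; intros; subst. exfalso; eapply Hno'; eauto.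
          + injection H1; intros; subst. exfalso; eapply Hno'; eauto.
          + injection H1; injection H2; intros; subst; auto.
        - intro F. apply NNPP; intro N2. apply N. exists F. intros chi Hg Ha.
          apply N2; eauto. }
      apply (Hno' k). apply (Hmax (Ak k)); auto.
      - intros t Ht; left; auto.
      - right; auto. }
    assert (Hmon : forall k F F', (forall x, In x F -> In x F') -> Bad k F -> Bad k F').
    { intros k F F' Hs HB chi Hg Ha. apply (HB chi); eauto. }
    assert (HG : forall m, exists G, forall k, k < m -> Bad k G).
    { induction m.
      - exists []; intros; lia.
      - destruct IHm as [G HG]. destruct (Hbad m) as [Fm HFm].
        exists (G ++ Fm). intros k Hk.
        destruct (Nat.eq_dec k m) as [->|Hne].
        + apply (Hmon m Fm); auto. intros; apply in_or_app; auto.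
        + apply (Hmon k G); [intros; apply in_or_app; auto|]. apply HG; lia. }
    destruct (HG (S n)) as [G HGb].
    destruct (proj2 PA (x0 :: G)) as [chi [Hg Ha]].
    assert (Hkn : chi x0 <= n) by (apply (Hbound _ _ _ Hg); left; auto).
    apply (HGb (chi x0) ltac:(lia) chi).
    - apply (Hmono G (x0 :: G)); auto. intros; right; auto.
    - intros x i Hx [Hi|Hi].
      + apply Ha; auto. right; auto.
      + injection Hi; intros; subst; auto. }
  pose (chi := fun x => proj1_sig (constructive_indefinite_description _ (Htot x))).
  assert (Hchi : forall x, A (x, chi x)).
  { intro x. exact (proj2_sig (constructive_indefinite_description _ (Htot x))). }
  exists chi. intro F. destruct (proj2 PA F) as [chi' [Hg Ha]].
  apply (Hloc F chi'); auto.
Qed.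

Lemma rt_sym X (R : relation X) (Hs : forall a b, R a b -> R b a) a b :
  clos_refl_trans X R a b -> clos_refl_trans X R b a.
Proof.
induction 1.
- apply rt_step; auto.
- apply rt_refl.
- eapply rt_trans; eauto.
Qed.

Lemma rt_chain X (e : entourage X) (chi : X -> nat) a b :
  clos_refl_trans X (fun u v => e u v /\ chi u = chi v) a b ->
  exists C, is_chain e (a :: C) /\ In b (a :: C) /\ forall z, In z (a :: C) -> chi z = chi a.
Proof.
intro H. apply clos_rt_rt1n in H. induction H.
- exists []; simpl; split; auto. split; auto. intros z [<-|[]]; auto.
- destruct H as [Hxy Hc]. destruct IHclos_refl_trans_1n as [C [Hch [Hin Hk]]].
  exists (y :: C). split; [split; auto|]. split; [right; auto|].
  intros w [<-|Hw]; auto. rewrite Hk; auto.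
Qed.

Lemma backward X E n (cs : coarse_space X E) :
  (forall e, E e -> exists d, E d /\ forall F : list X, exists chi : X -> nat,
    (forall x, In x F -> chi x <= n) /\
    forall C : list X, (forall x, In x C -> In x F) -> is_chain e C ->
      (forall x y, In x C -> In y C -> chi x = chi y) ->
      forall x y, In x C -> In y C -> d x y) -> asdim_le E n.
Proof.
intro H. exists n; split; auto. intros e He.
assert (Hs : forall x y, e x y -> e y x) by (apply (cs_sym _ _ cs); auto).
destruct (cs_comp _ _ cs e e He He) as [e2 [Ee2 He2]].
assert (Hs2 : forall x y, e2 x y -> e2 y x) by (apply (cs_sym _ _ cs); auto).
destruct (H e2 Ee2) as [d [Ed HF]].
pose (Good := fun F (chi : X -> nat) => (forall x, In x F -> chi x <= n) /\
    forall C : list X, (forall x, In x C -> In x F) -> is_chain e2 C ->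
      (forall x y, In x C -> In y C -> chi x = chi y) ->
      forall x y, In x C -> In y C -> d x y).
destruct (compact X n Good) as [chi Hchi].
- intros F F' chi Hs' [H1 H2]. split; auto. intros C HC; apply H2; auto.
- intros F chi chi' Heq [H1 H2]. split.
  + intros x Hx; rewrite <- Heq; auto.
  + intros C Hin Hch Hm. apply H2; auto. intros x y Hx Hy.
    rewrite !Heq; auto.
- intros F chi x [H1 _] Hx; auto.
- exact HF.
- assert (Hb : forall x, chi x <= n) by (intro x; apply (proj1 (Hchi [x])); left; auto).
  assert (Hc : forall C, is_chain e2 C -> (forall x y, In x C -> In y C -> chi x = chi y) ->
      forall x y, In x C -> In y C -> d x y) by (intros C; apply (proj2 (Hchi C)); auto).
  pose (step := fun u v => e2 u v /\ chi u = chi v).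
  pose (conn := clos_refl_trans X step).
  assert (Hsym : forall a b, conn a b -> conn b a).
  { intros a b; apply rt_sym. intros u v [H1 H2]; split; auto. }
  exists (fun A => exists w, A = conn w). split; [|split].
  + intro x. exists (conn x). split; [exists x; auto|apply rt_refl].
  + exists d; split; auto. intros A [w ->] y z Hy Hz.
    assert (conn y z) by (eapply rt_trans; [apply Hsym; exact Hy| exact Hz]).
    destruct (rt_chain X e2 chi y z H0) as [C [Hch [Hin Hk]]].
    apply (Hc (y :: C)); auto. intros a b Ha Hb'; rewrite (Hk a Ha), (Hk b Hb'); auto.
    left; auto.
  + intro x.
    pose (yy := fun i => epsilon (inhabits x) (fun y => e x y /\ chi y = i)).
    exists (map (fun i => conn (yy i)) (seq 0 (S n))). split.
    * rewrite length_map, length_seq; auto.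
    * intros A [w ->] [y [Hwy Hxy]]. unfold ball in Hxy.
      assert (Hyy : e x (yy (chi y)) /\ chi (yy (chi y)) = chi y).
      { apply (epsilon_spec (inhabits x) (fun y0 => e x y0 /\ chi y0 = chi y)). eauto. }
      exists (conn (yy (chi y))). split.
      -- apply (in_map (fun i => conn (yy i)) (seq 0 (S n)) (chi y)). apply in_seq. specialize (Hb y). lia.
      -- assert (Hwz : conn w (yy (chi y))).
         { eapply rt_trans; [exact Hwy|]. apply rt_step. split.
           - apply (He2 y x); auto. apply Hyy.
           - symmetry; apply Hyy. }
         intro z; split; intro Hz.
         ++ eapply rt_trans; [apply Hsym; exact Hwz| exact Hz].
         ++ eapply rt_trans; [exact Hwz| exact Hz].
Qed.

Theorem proposition2p5 :
  forall (X : Type) (E : entourage X -> Prop) (n : nat),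
    coarse_space X E ->
    (asdim_le E n <->
     forall e, E e ->
       exists d, E d /\
         forall F : list X,
           exists chi : X -> nat,
             (forall x, In x F -> chi x <= n) /\
             forall C : list X,
               (forall x, In x C -> In x F) ->
               is_chain e C ->
               (forall x y, In x C -> In y C -> chi x = chi y) ->
               forall x y, In x C -> In y C -> d x y).
Proof.
intros X E n cs. split.
- apply forward; auto.
- apply backward; auto.
Qed.
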